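(* Let $G$ be a finite group. Then $K(G)=G$ if and only if $G$ is abelian or $G$ is quasi-simple.
   Context: For $\chi\in\mathrm{Irr}(G)$, the center of $\chi$ is $Z(\chi)=\{g\in G : |\chi(g)|=\chi(1)\}$. For a nonabelian group $G$, let $\mathcal{X}=\{\chi\in\mathrm{Irr}(G) : Z(\chi)>Z(G)\}$ (strict containment) and define $K(G)=\bigcap_{\chi\in\mathcal{X}}\ker(\chi)$; if $G$ is abelian, set $K(G)=G$. A group $G$ is quasi-simple if $G'=G$ and $G/Z(G)$ is nonabelian simple. *)

(* Defs.v *)
From mathcomp Require Import all_boot all_order all_algebra all_fingroup all_solvable all_field all_character.
Set Implicit Arguments. Unset Strict Implicit. Unset Printing Implicit Defensive.
Import GRing.Theory Num.Theory.
Local Open Scope group_scope.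

Definition char_center (gT : finGroupType) (G : {group gT}) (chi : 'CF(G)) : {set gT} :=
  [set g in G | `|chi g| == chi 1%g]%R.

Definition Xset (gT : finGroupType) (G : {group gT}) : {set Iirr G} :=
  [set i : Iirr G | 'Z(G) \proper char_center ('chi[G]_i)%R].

(* K(G) = intersection of kernels of chi in X (intersected with G, so the
   empty intersection is G); K(G) = G when G is abelian. *)
Definition KG (gT : finGroupType) (G : {group gT}) : {set gT} :=
  if abelian G then G
  else G :&: \bigcap_(i in Xset G) cfker ('chi[G]_i)%R.

Definition quasi_simple (gT : finGroupType) (G : {group gT}) : bool :=
  [&& [~: G, G] == G, simple (G / 'Z(G)) & ~~ abelian (G / 'Z(G))].

(* Main.v *)
Require Import Defs.
From mathcomp Require Import all_boot all_order all_algebra all_fingroup all_solvable all_field all_character.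
Set Implicit Arguments. Unset Strict Implicit.
Import GRing.Theory Num.Theory.
Local Open Scope group_scope.
Lemma exists_irr_ker (gT : finGroupType) (G N : {group gT}) :
  N <| G -> ~~ (G \subset N) -> exists2 i : Iirr G, (i != 0)%R & N \subset cfker ('chi_i)%R.
Proof.
move=> nNG /subsetPn[x Gx xN].
have nx : x \in 'N(N) by rewrite (subsetP (normal_norm nNG)).
have cx : coset N x \in (G / N)%G by rewrite mem_quotient.
have [i iK] : exists i : Iirr (G / N)%G, coset N x \notin cfker ('chi_i)%R.
  apply/existsP; rewrite -negb_forall; apply/negP => /forallP H.
  have : coset N x \in \bigcap_i cfker ('chi[(G / N)%G]_i)%R.
    by apply/bigcapP => i _; apply: H.
  rewrite TI_cfker_irr inE => /eqP /(coset_idr nx); exact/negP.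
have i0 : (i != 0)%R by apply: contraNneq iK => ->; rewrite cfker_irr0.
exists (mod_Iirr i); first by rewrite mod_Iirr_eq0.
by rewrite mod_IirrE // cfker_mod.
Qed.
Lemma char_center_irr (gT : finGroupType) (G : {group gT}) (i : Iirr G) :
  char_center ('chi_i)%R = ('Z('chi_i)%CF)%R.
Proof. by rewrite /char_center /cfcenter irr_char. Qed.

Lemma center_sub_cfc (gT : finGroupType) (G : {group gT}) (i : Iirr G) :
  'Z(G) \subset ('Z('chi_i)%CF)%R.
Proof. by rewrite -cap_cfcenter_irr; apply: bigcap_inf. Qed.

Lemma qs_normal (gT : finGroupType) (G N : {group gT}) :
  quasi_simple G -> N <| G -> ~~ (G \subset N) -> N \subset 'Z(G).
Proof.
case/and3P=> /eqP perf /simpleP[_ simG] _ nNG sGN.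
have nZG := center_normal G.
have nZN : N \subset 'N('Z(G)) := subset_trans (normal_sub nNG) (normal_norm nZG).
have [eq1|eqNG] := simG _ (quotient_normal 'Z(G) nNG).
  by rewrite -quotient_sub1 // eq1.
exfalso; move/negP: sGN; apply.
rewrite -perf -derg1; apply: der1_min; first exact: normal_norm.
have sGNZ : G \subset N <*> 'Z(G).
  rewrite -(quotientSGK (normal_norm nZG)); last exact: joing_subr.
  by rewrite quotientYidr // -eqNG.
apply: abelianS (quotientS N sGNZ) _.
rewrite quotientYidl; last by rewrite (subset_trans (normal_sub nZG)) ?normal_norm.
exact/quotient_abelian/center_abelian.
Qed.

Theorem lemma2p2 (gT : finGroupType) (G : {group gT}) :
  KG G = G <-> (abelian G \/ quasi_simple G).
Proof.
split.
- rewrite /KG; case: ifP => [abG _|nabG]; first by left.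
  move=> KGG; right.
  have X0 : forall i, i \in Xset G -> (i == 0)%R.
    move=> i Xi; rewrite -subGcfker.
    have : G \subset G :&: \bigcap_(j in Xset G) cfker ('chi_j)%R by rewrite KGG.
    by rewrite subsetI => /andP[_ /bigcapsP]; apply.
  have cZ : forall i : Iirr G, (i != 0)%R -> ('Z('chi_i)%CF)%R \subset 'Z(G).
    move=> i i0; have := X0 i; rewrite inE char_center_irr properE center_sub_cfc /=.
    by move=> H; apply: contraT => /H; rewrite (negbTE i0).
  have F : forall N : {group gT}, N <| G -> ~~ (G \subset N) -> N \subset 'Z(G).
    move=> N nNG sGN; have [i i0 sN] := exists_irr_ker nNG sGN.
    apply: subset_trans sN (subset_trans _ (cZ i i0)).
    exact: normal_sub (cfker_center_normal _).
  have perf : [~: G, G] = G.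
    apply/eqP; rewrite eqEsubset der1_subG /=; apply: contraFT nabG => sG.
    have [i i0 sN] := exists_irr_ker (der_normal 1 G) sG.
    have lin : ('chi_i)%R \is a linear_char by rewrite lin_irr_der1.
    have : G \subset ('Z('chi_i)%CF)%R.
      apply/subsetP=> x Gx; rewrite irr_cfcenterE // normC_lin_char //.
      by rewrite lin_char1.
    move/subset_trans/(_ (cZ i i0)) => sGZ.
    exact: abelianS sGZ (center_abelian G).
  have nZG := center_normal G.
  have nab : ~~ abelian (G / 'Z(G)).
    apply: contraFN nabG => ab; apply: abelianS (center_abelian G).
    by rewrite -{1}perf -derg1 der1_min ?normal_norm.
  apply/and3P; split; [by rewrite perf | | by []].
  apply/simpleP; split.
    by apply: contraNneq nab => ->; apply: abelian1.
  move=> H nHG.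
  have nN : coset 'Z(G) @*^-1 H <| G.
    by move: nHG; rewrite -cosetpre_normal quotientGK.
  have [sGN|sGN] := boolP (G \subset coset 'Z(G) @*^-1 H).
    right; apply/eqP; rewrite eqEsubset normal_sub //=.
    by rewrite -(cosetpreK H) quotientS.
  left; apply/trivgP; rewrite -(cosetpreK H).
  by rewrite -(trivg_quotient 'Z(G)) quotientS // F.
- case=> [abG|qsG]; first by rewrite /KG abG.
  rewrite /KG; case: ifP => // nabG.
  apply/setIidPl/bigcapsP => i Xi.
  have [->|i0] := eqVneq i 0%R; first by rewrite subGcfker.
  exfalso; move: Xi; rewrite inE char_center_irr properE => /andP[_].
  apply/negP/negPn.
  have nsG : ~~ (G \subset cfker ('chi_i)%R) by rewrite subGcfker.
  apply: (qs_normal qsG (cfcenter_normal _)).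
  apply: contra nsG => sGZ.
  have eqZ : ('Z('chi_i)%CF)%R = G.
    by apply/eqP; rewrite eqEsubset cfcenter_sub.
  have cyc := cfcenter_cyclic ('chi_i)%R; rewrite eqZ in cyc.
  case/and3P: qsG => /eqP perf _ _.
  rewrite -{1}perf -derg1 der1_min ?normal_norm ?cfker_normal //.
  exact: cyclic_abelian.
Qed.
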